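(* There is no polynomial $p(a,y,z)\in\mathbb{C}[a,y,z]$ such that for all $(y,z)\in\mathbb{C}^2$: $(y=0\wedge z=0)\iff(\exists a\in\mathbb{C})\,p(a,y,z)=0$. *)

(* Defs.v *)
(* The field of complex numbers C is modelled as
   [complex R] (mathcomp-real-closed) over Stdlib's real numbers R
   (which is a real-closed field via mathcomp-analysis' Rstruct). *)
From mathcomp Require Import all_boot all_algebra.
From mathcomp Require Import Rstruct complex.
From mathcomp Require Import mpoly.

Definition C : numClosedFieldType := (Rdefinitions.R)[i]%C.

Definition pt3 (a y z : C) : 'I_3 -> C :=
  fun i => nth 0%R [:: a; y; z] (nat_of_ord i).

(* Main.v *)
Require Import Defs.
From mathcomp Require Import all_boot all_algebra.
From mathcomp Require Import Rstruct complex.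
From mathcomp Require Import mpoly.

Import GRing.Theory Num.Theory.
Local Open Scope ring_scope.

Lemma noroot_const (q : {poly C}) :
  (forall x, q.[x] != 0) -> forall x, q.[x] = q.[0].
Proof.
move=> H x.
have s1 : size q == 1%N.
  apply: contraT => /closed_rootP [r]; rewrite /root => /eqP r0.
  by move: (H r); rewrite r0 eqxx.
by rewrite (size1_polyC (eq_leq (eqP s1))) !hornerC.
Qed.

Lemma vanish0 (q : {poly C}) :
  (forall x, x != 0 -> q.[x] = 0) -> q.[0] = 0.
Proof.
move=> H; apply/eqP; apply: contraT => nz.
have qnz : q != 0 by apply: contra nz => /eqP ->; rewrite horner0.
set rs := [seq (i%:R : C) | i <- iota 1 (size q)].
have := @max_poly_roots _ q rs qnz.
rewrite size_map size_iota ltnn; apply => //.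
  apply/allP => x; rewrite /rs; case/mapP => i; rewrite mem_iota => /andP [i1 _] ->.
  by rewrite /root H // pnatr_eq0 -lt0n.
rewrite map_inj_uniq ?iota_uniq // => a b /eqP; rewrite eqr_nat => /eqP //.
Qed.

Lemma slice (p : {mpoly C[3]}) (w : C -> 'I_3 -> C) (k : 'I_3) :
  (forall x i, i != k -> w x i = w 0 i) -> (forall x, w x k = x) ->
  exists q : {poly C}, forall x, q.[x] = p.@[w x].
Proof.
move=> Hw Hk.
pose h (i : 'I_3) : {poly C} := if i == k then 'X else (w 0 i)%:P.
exists (\sum_(m <- msupp p) p@_m *: \prod_(i < 3) (h i) ^+ m i) => x.
rewrite mevalE horner_sum; apply: eq_bigr => m _.
rewrite hornerZ horner_prod; congr (_ * _); apply: eq_bigr => i _.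
rewrite horner_exp /h; case: eqP => [->|/eqP ne].
  by rewrite hornerX Hk.
by rewrite hornerC Hw.
Qed.

Lemma abstract_main (F : C -> C -> C -> C)
  (sa : forall y z, exists q : {poly C}, forall x, q.[x] = F x y z)
  (sy : forall a z, exists q : {poly C}, forall x, q.[x] = F a x z)
  (sz : forall a y, exists q : {poly C}, forall x, q.[x] = F a y x)
  (H : forall y z, (y = 0 /\ z = 0) <-> (exists a, F a y z = 0)) : False.
Proof.
have step1 : forall y z, (y != 0 \/ z != 0) -> forall a, F a y z = F 0 y z.
  move=> y z nz a; have [q Hq] := sa y z.
  rewrite -!Hq; apply: noroot_const => x; rewrite Hq; apply/eqP => F0.
  have [y0 z0] : y = 0 /\ z = 0 by apply/H; exists x.
  by case: nz; rewrite ?y0 ?z0 eqxx.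
have [a0 Ha0] : exists a, F a 0 0 = 0 by apply/H.
have F000 : F 0 0 0 = 0.
  have [q1 H1] := sz a0 0; have [q2 H2] := sz 0 0.
  have V : (q1 - q2).[0] = 0.
    apply: vanish0 => x nx.
    by rewrite hornerD hornerN H1 H2 step1 ?subrr //; right.
  by move: V; rewrite hornerD hornerN H1 H2 Ha0 sub0r => /eqP; rewrite oppr_eq0 => /eqP.
have step3 : forall y, y != 0 -> F 0 y 1 = F 0 y 0.
  move=> y ny; have [q Hq] := sz 0 y.
  rewrite -!Hq; apply: noroot_const => x; rewrite Hq; apply/eqP => F0.
  have [y0 _] : y = 0 /\ x = 0 by apply/H; exists 0.
  by move: ny; rewrite y0 eqxx.
have F001 : F 0 0 1 = 0.
  have [q1 H1] := sy 0 1; have [q2 H2] := sy 0 0.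
  have := vanish0 (q1 - q2); rewrite hornerD hornerN H1 H2 F000 subr0.
  apply => x nx; by rewrite hornerD hornerN H1 H2 step3 ?subrr.
have [_ ] : (0 : C) = 0 /\ (1 : C) = 0 by apply/H; exists 0; exact: F001.
by move/eqP; rewrite oner_eq0.
Qed.

Theorem corollary6p4 :
  ~ (exists p : {mpoly C[3]},
        forall y z : C,
          (y = 0 /\ z = 0) <-> (exists a : C, p.@[pt3 a y z] = 0)).
Proof.
move=> [p H].
apply: (abstract_main (fun a y z => p.@[pt3 a y z])) => //.
- move=> y z; apply: (slice p (fun x => pt3 x y z) (0 : 'I_3)) => //.
  by move=> x [[|[|[|]]] ?].
- move=> a z; apply: (slice p (fun x => pt3 a x z) (1 : 'I_3)) => //.
  by move=> x [[|[|[|]]] ?].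
- move=> a y; apply: (slice p (fun x => pt3 a y x) (2 : 'I_3)) => //.
  by move=> x [[|[|[|]]] ?].
Qed.
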